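(* If $x\in\mathbb{R}$ satisfies $|x|\le1/8$ or $|x-T\pi|\le1/8$, then $\mathrm{Re}(H(x))\ge1/2$.
   Context: Rudin–Shapiro polynomials: $P_0(z)=Q_0(z)=1$ and for $s\ge0$, $P_{s+1}(z)=P_s(z)+z^{2^s}Q_s(z)$, $Q_{s+1}(z)=P_s(z)-z^{2^s}Q_s(z)$. Let $t$ be an odd positive integer and $T:=2^{t+10}$. For $x\in\mathbb{R}$ define $\alpha(x):=2^{-(t+1)/2}P_t(e^{ix/T})$, $\beta(x):=2^{-(t+1)/2}Q_t(e^{ix/T})$, and $H(x):=e^{ix}\alpha(x)+e^{2ix}\beta(x)$. *)

(* Defs.v *)
From Stdlib Require Import Reals.
From Coquelicot Require Import Coquelicot.
Open Scope R_scope.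

(* Rudin-Shapiro polynomials, evaluated at a complex point z. *)
Fixpoint RS (s : nat) (z : C) : C * C :=
  match s with
  | O => (RtoC 1, RtoC 1)
  | S s' => let (p, q) := RS s' z in
            (Cplus p (Cmult (Cpow z (2 ^ s')) q),
             Cminus p (Cmult (Cpow z (2 ^ s')) q))
  end.

Definition RS_P (s : nat) (z : C) : C := fst (RS s z).
Definition RS_Q (s : nat) (z : C) : C := snd (RS s z).

Definition expi (theta : R) : C := (cos theta, sin theta).

Definition Tt (t : nat) : R := 2 ^ (t + 10).

Definition nrm (t : nat) : R := Rpower 2 (- (INR t + 1) / 2).

Definition alpha (t : nat) (x : R) : C :=
  Cmult (RtoC (nrm t)) (RS_P t (expi (x / Tt t))).
Definition beta (t : nat) (x : R) : C :=
  Cmult (RtoC (nrm t)) (RS_Q t (expi (x / Tt t))).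

Definition H (t : nat) (x : R) : C :=
  Cplus (Cmult (expi x) (alpha t x)) (Cmult (expi (2 * x)) (beta t x)).

(* Main.v *)
Require Import Defs.
From Stdlib Require Import Reals Lra Psatz.
From Coquelicot Require Import Coquelicot.
Open Scope R_scope.
Lemma cos_lower u : Rabs u <= 1 -> 1 - u^2/2 <= cos u.
Proof.
  intros Hu. assert (H1 := PI2_1). apply Rabs_le_between in Hu.
  assert (Hc : cos_lb u <= cos u <= cos_ub u) by (apply COS; lra).
  destruct Hc as [Hl _].
  eapply Rle_trans; [|exact Hl].
  unfold cos_lb, cos_approx, cos_term. simpl sum_f_R0. simpl.
  match goal with |- _ <= ?r => replace r with (1 - u^2/2 + u^4/24 - u^6/720) by field end.
  assert (0 <= u*u) by nra. assert (u*u <= 1) by nra.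
  nra.
Qed.

Definition n2 (z : C) := fst z ^ 2 + snd z ^ 2.

Ltac csolve := repeat match goal with z : C |- _ => destruct z end;
  unfold Cminus, Cplus, Cmult, Copp, RtoC; apply injective_projections; simpl; ring.

Lemma Cmod_n2 z : Cmod z ^ 2 = n2 z.
Proof. rewrite Cmod2_alt. reflexivity. Qed.

Lemma n2_mult a b : n2 (a * b) = n2 a * n2 b.
Proof. destruct a, b; unfold n2, Cmult; simpl; ring. Qed.

Lemma n2_pow z m : n2 z = 1 -> n2 (Cpow z m) = 1.
Proof. intros H; induction m; simpl Cpow. unfold n2; simpl; ring.
  rewrite n2_mult, H, IHm; ring. Qed.

Lemma n2_par a b : n2 (a + b) + n2 (a - b) = 2 * (n2 a + n2 b).
Proof. destruct a, b; unfold n2, Cminus, Cplus, Copp; simpl; ring. Qed.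

Lemma RS_S s z : RS (S s) z =
  (RS_P s z + Cpow z (2 ^ s) * RS_Q s z, RS_P s z - Cpow z (2 ^ s) * RS_Q s z)%C.
Proof. unfold RS_P, RS_Q; simpl; destruct (RS s z); reflexivity. Qed.

Lemma RS_n2 s w : n2 w = 1 -> n2 (RS_P s w) + n2 (RS_Q s w) = 2 ^ (s + 1).
Proof.
  intros Hw; induction s.
  - unfold RS_P, RS_Q, n2; simpl; ring.
  - unfold RS_P at 1, RS_Q at 1. rewrite RS_S. simpl fst; simpl snd.
    rewrite n2_par, n2_mult, n2_pow by exact Hw.
    replace (S s + 1)%nat with (S (s + 1)) by lia. simpl pow. rewrite <- IHs. lra.
Qed.

Lemma Cmod_expi a : Cmod (expi a) = 1.
Proof. assert (h := sin2_cos2 a). unfold Rsqr in h.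
  unfold Cmod, expi; simpl fst; simpl snd.
  replace (cos a ^ 2 + sin a ^ 2) with 1 by (rewrite <- h; ring). apply sqrt_1. Qed.

Lemma expi_diff a b : Rabs (a - b) <= 1 -> Cmod (expi a - expi b) <= Rabs (a - b).
Proof.
  intros H. apply cos_lower in H.
  assert (E : Cmod (expi a - expi b) ^ 2 = 2 - 2 * cos (a - b)).
  { rewrite Cmod_n2. unfold n2, expi, Cminus, Cplus, Copp; simpl.
    rewrite cos_minus. assert (h1 := sin2_cos2 a); assert (h2 := sin2_cos2 b).
    unfold Rsqr in *. nra. }
  assert (E2 : Rabs (a - b) ^ 2 = (a - b) ^ 2) by apply pow2_abs.
  assert (0 <= Cmod (expi a - expi b)) by apply Cmod_ge_0.
  assert (0 <= Rabs (a - b)) by apply Rabs_pos.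
  nra.
Qed.

Lemma Cmod_minus_le u v : Cmod (u - v) <= Cmod u + Cmod v.
Proof. unfold Cminus. eapply Rle_trans; [apply Cmod_triangle|]. rewrite Cmod_opp. lra. Qed.

Lemma Cmod_pow1 z m : Cmod z = 1 -> Cmod (Cpow z m) = 1.
Proof. intros H; rewrite Cmod_pow, H; apply pow1. Qed.

Lemma pow_diff z w m : Cmod z = 1 -> Cmod w = 1 ->
  Cmod (Cpow z m - Cpow w m) <= INR m * Cmod (z - w).
Proof.
  intros Hz Hw; induction m.
  - simpl. replace (1 - 1)%C with (RtoC 0) by csolve. rewrite Cmod_0; lra.
  - simpl Cpow. rewrite S_INR.
    replace (z * Cpow z m - w * Cpow w m)%C with
      (z * (Cpow z m - Cpow w m) + (z - w) * Cpow w m)%C.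
    2:{ generalize (Cpow z m) (Cpow w m); intros; csolve. }
    eapply Rle_trans; [apply Cmod_triangle|].
    rewrite !Cmod_mult, Hz, Cmod_pow1 by exact Hw. lra.
Qed.


Lemma C11 : Cmod (1 - 1) = 0.
Proof. replace (1 - 1)%C with (RtoC 0) by csolve. apply Cmod_0. Qed.
Lemma Cid1 (a b A B : C) : (a * A - b * B = a * (A - B) + (a - b) * B)%C.
Proof. csolve. Qed.
Lemma Cid2 (p q P Q : C) : ((p + q) - (P + Q) = (p - P) + (q - Q))%C.
Proof. csolve. Qed.
Lemma Cid3 (p q P Q : C) : ((p - q) - (P - Q) = (p - P) - (q - Q))%C.
Proof. csolve. Qed.
Lemma pert (c d : R) (z w : C)
  (Hc : 4/3 <= c) (Hd : 0 <= d) (Hz : Cmod z = 1) (Hw : Cmod w = 1)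
  (Hzw : Cmod (z - w) <= d) (HQ : forall s, Cmod (RS_Q s w) <= c ^ (s + 1)) s : Cmod (RS_P s z - RS_P s w) <= 2 * d * (2 * c) ^ s /\
               Cmod (RS_Q s z - RS_Q s w) <= 2 * d * (2 * c) ^ s.
Proof.
  induction s as [|s [IP IQ]].
  - unfold RS_P, RS_Q; simpl RS; simpl fst; simpl snd. rewrite C11; lra.
  - unfold RS_P at 1 2, RS_Q at 1 2. rewrite !RS_S. simpl fst; simpl snd.
    assert (K : Cmod (Cpow z (2 ^ s) * RS_Q s z - Cpow w (2 ^ s) * RS_Q s w)
               <= 2 * d * (2 * c) ^ s + 2 ^ s * d * c ^ (s + 1)).
    { rewrite Cid1.
      eapply Rle_trans; [apply Cmod_triangle|].
      rewrite !Cmod_mult, Cmod_pow1 by exact Hz.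
      assert (h1 := pow_diff z w (2 ^ s) Hz Hw). rewrite pow_INR in h1.
      replace (INR 2) with 2 in h1 by reflexivity.
      assert (h2 := HQ s). assert (h3 := Cmod_ge_0 (RS_Q s w)).
      assert (h4 := Cmod_ge_0 (Cpow z (2 ^ s) - Cpow w (2 ^ s))).
      assert (0 < 2 ^ s) by (apply pow_lt; lra).
      assert (Cmod (Cpow z (2 ^ s) - Cpow w (2 ^ s)) <= 2 ^ s * d).
      { eapply Rle_trans; [exact h1|]. apply Rmult_le_compat_l; lra. }
      assert (0 <= c ^ (s+1)) by (apply pow_le; lra).
      assert (Cmod (Cpow z (2 ^ s) - Cpow w (2 ^ s)) * Cmod (RS_Q s w) <= 2 ^ s * d * c ^ (s+1)).
      { apply Rmult_le_compat; auto. } lra. }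
    assert (B : 2 * d * (2 * c) ^ s + (2 * d * (2 * c) ^ s + 2 ^ s * d * c ^ (s + 1))
                <= 2 * d * (2 * c) ^ S s).
    { replace (s + 1)%nat with (S s) by lia. simpl pow. rewrite !Rpow_mult_distr.
      assert (0 <= 2 ^ s) by (apply pow_le; lra). assert (0 <= c ^ s) by (apply pow_le; lra).
      assert (0 <= d * 2 ^ s * c ^ s) by (apply Rmult_le_pos; [apply Rmult_le_pos|]; lra).
      set (X := d * 2 ^ s * c ^ s) in *.
      replace (2 * d * (2 ^ s * c ^ s) + (2 * d * (2 ^ s * c ^ s) + 2 ^ s * d * (c * c ^ s)))
        with ((4 + c) * X) by (unfold X; ring).
      replace (2 * d * (2 * c * (2 ^ s * c ^ s))) with ((4 * c) * X) by (unfold X; ring).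
      apply Rmult_le_compat_r; lra. }
    split.
    + rewrite Cid2.
      eapply Rle_trans; [apply Cmod_triangle|]. lra.
    + rewrite Cid3.
      eapply Rle_trans; [apply Cmod_minus_le|]. lra.
Qed.

Lemma Cpow_R r n : Cpow (RtoC r) n = RtoC (r ^ n).
Proof. induction n; simpl Cpow. reflexivity. rewrite IHn. simpl pow. csolve. Qed.

Lemma m1_pow s : (-1) ^ (2 ^ S s) = 1.
Proof. rewrite Nat.pow_succ_r'. apply pow_1_even. Qed.

Lemma RS_SS n z : RS (S (S n)) z =
  let p := RS_P n z in let q := RS_Q n z in
  let p1 := (p + Cpow z (2 ^ n) * q)%C in let q1 := (p - Cpow z (2 ^ n) * q)%C in
  ((p1 + Cpow z (2 ^ S n) * q1)%C, (p1 - Cpow z (2 ^ S n) * q1)%C).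
Proof. rewrite RS_S. unfold RS_P, RS_Q. rewrite RS_S. reflexivity. Qed.

Lemma RS_one k : RS (2 * k + 1) (RtoC 1) = (RtoC (2 ^ (k + 1)), RtoC 0).
Proof.
  induction k.
  - simpl. f_equal; csolve.
  - replace (2 * S k + 1)%nat with (S (S (2 * k + 1))) by lia.
    rewrite RS_SS. cbv zeta. unfold RS_P, RS_Q. rewrite IHk. simpl fst; simpl snd.
    rewrite !Cpow_R, !pow1. replace (S k + 1)%nat with (S (k + 1)) by lia.
    simpl (2 ^ S (k + 1)). f_equal; csolve.
Qed.

Lemma RS_m1 k : RS (2 * k + 1) (RtoC (-1)) = (RtoC 0, RtoC (2 ^ (k + 1))).
Proof.
  induction k.
  - simpl. f_equal; csolve.
  - replace (2 * S k + 1)%nat with (S (S (2 * k + 1))) by lia.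
    rewrite RS_SS. cbv zeta. unfold RS_P, RS_Q. rewrite IHk. simpl fst; simpl snd.
    rewrite !Cpow_R. replace (2 * k + 1)%nat with (S (2 * k)) by lia. rewrite !m1_pow.
    replace (S k + 1)%nat with (S (k + 1)) by lia.
    simpl (2 ^ S (k + 1)). f_equal; csolve.
Qed.

Lemma nrm_eq t : nrm t = / (sqrt 2) ^ (t + 1).
Proof.
  unfold nrm. rewrite <- (Rpower_sqrt 2) by lra.
  rewrite <- Rpower_pow by (unfold Rpower; apply exp_pos).
  rewrite <- Rpower_Ropp, Rpower_mult. f_equal. rewrite plus_INR; simpl INR; field.
Qed.

Lemma sqrt2_ge : 4/3 <= sqrt 2.
Proof. assert (h := pow2_sqrt 2 ltac:(lra)). assert (0 <= sqrt 2) by apply sqrt_pos. nra. Qed.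

Lemma sqrt2_pow n : sqrt 2 ^ (2 * n) = 2 ^ n.
Proof. rewrite pow_mult, pow2_sqrt by lra. reflexivity. Qed.

Lemma eps_le t d : 0 <= d -> nrm t * (2 * d * (2 * sqrt 2) ^ t) <= 2 * d * 2 ^ t.
Proof.
  intros Hd. rewrite nrm_eq, Rpow_mult_distr, pow_add. simpl (sqrt 2 ^ 1).
  assert (hc := sqrt2_ge). assert (0 < sqrt 2 ^ t) by (apply pow_lt; lra).
  assert (0 < 2 ^ t) by (apply pow_lt; lra).
  replace (/ (sqrt 2 ^ t * (sqrt 2 * 1)) * (2 * d * (2 ^ t * sqrt 2 ^ t)))
    with ((2 * d * 2 ^ t) / sqrt 2) by (field; lra).
  apply Rmult_le_reg_r with (sqrt 2); [lra|]. unfold Rdiv. rewrite Rmult_assoc, Rinv_l by lra.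
  assert (0 <= 2 * d * 2 ^ t) by (apply Rmult_le_pos; lra). nra.
Qed.

Lemma HQ_bound w s : n2 w = 1 -> Cmod (RS_Q s w) <= sqrt 2 ^ (s + 1).
Proof.
  intros Hw. assert (h := RS_n2 s w Hw). rewrite <- !Cmod_n2 in h.
  assert (E : (sqrt 2 ^ (s + 1)) ^ 2 = 2 ^ (s + 1)).
  { rewrite <- pow_mult, Nat.mul_comm, pow_mult, pow2_sqrt by lra. reflexivity. }
  assert (0 <= sqrt 2 ^ (s + 1)) by (apply pow_le; apply sqrt_pos).
  assert (0 <= Cmod (RS_Q s w)) by apply Cmod_ge_0.
  assert (0 <= Cmod (RS_P s w) ^ 2) by (apply pow2_ge_0). nra.
Qed.

Lemma Re_half h : Cmod (h - 1) <= 1/2 -> Re h >= 1/2.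
Proof.
  intros Hh. assert (k := re_le_Cmod (h - 1)).
  destruct h as [a b]. unfold Re in *. simpl in k. simpl.
  apply Rabs_le_between in k. lra.
Qed.

Lemma Cid4 (e1 e2 a b : C) : (e1 * a + e2 * b - 1 = e1 * (a - 1) + (e1 - 1) + e2 * b)%C.
Proof. csolve. Qed.
Lemma Cid5 (e1 e2 a b : C) : (e1 * a + e2 * b - 1 = e1 * a + e2 * (b - 1) + (e2 - 1))%C.
Proof. csolve. Qed.
Lemma Cid6 (n : R) (p q : C) : p = RtoC (/ n) -> n <> 0 ->
  (RtoC n * q - 1 = RtoC n * (q - p))%C.
Proof. intros -> Hn. destruct q. unfold Cminus, Cplus, Cmult, Copp, RtoC; apply injective_projections; simpl; field; auto. Qed.
Lemma Cid7 (n : R) (q : C) : (RtoC n * q = RtoC n * (q - RtoC 0))%C.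
Proof. csolve. Qed.
Lemma Cmod3 a b c : Cmod (a + b + c) <= Cmod a + Cmod b + Cmod c.
Proof. eapply Rle_trans; [apply Cmod_triangle|]. assert (h := Cmod_triangle a b). lra. Qed.

Lemma expi0 : expi 0 = RtoC 1.
Proof. unfold expi; rewrite cos_0, sin_0; reflexivity. Qed.
Lemma expiPI : expi PI = RtoC (-1).
Proof. unfold expi; rewrite cos_PI, sin_PI; reflexivity. Qed.
Lemma Cmod_nrm t q : Cmod (RtoC (nrm t) * q) = nrm t * Cmod q.
Proof. rewrite Cmod_mult, Cmod_R, Rabs_pos_eq. reflexivity. unfold nrm, Rpower. left; apply exp_pos. Qed.

Lemma Tt_eq t : Tt t = 2 ^ t * 1024.
Proof. unfold Tt. rewrite pow_add. simpl (2 ^ 10). ring. Qed.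
Lemma Tt_INR t : Tt t = INR (2 ^ (t + 10)).
Proof. unfold Tt. rewrite pow_INR. reflexivity. Qed.

Lemma n2_1 : n2 (RtoC 1) = 1.
Proof. unfold n2; simpl; ring. Qed.
Lemma n2_m1 : n2 (RtoC (-1)) = 1.
Proof. unfold n2; simpl; ring. Qed.
Lemma Cmod_R1 : Cmod (RtoC 1) = 1.
Proof. rewrite Cmod_R. apply Rabs_R1. Qed.
Lemma Cmod_Rm1 : Cmod (RtoC (-1)) = 1.
Proof. rewrite Cmod_R. rewrite Rabs_left by lra. ring. Qed.
Lemma nrm_ge t : 0 <= nrm t.
Proof. unfold nrm, Rpower. left; apply exp_pos. Qed.
Lemma expi_2T t : expi (2 * (Tt t * PI)) = RtoC 1.
Proof.
  unfold expi. rewrite Tt_INR.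
  replace (2 * (INR (2 ^ (t + 10)) * PI)) with (0 + 2 * INR (2 ^ (t + 10)) * PI) by ring.
  rewrite cos_period, sin_period, cos_0, sin_0. reflexivity.
Qed.

Theorem lemma3p9 (t : nat) (ht : Nat.odd t = true) (x : R)
  (hx : Rabs x <= 1 / 8 \/ Rabs (x - Tt t * PI) <= 1 / 8) :
  Re (H t x) >= 1 / 2.
Proof.
  apply Nat.odd_spec in ht. destruct ht as [k Hk].
  assert (HT : Tt t = 2 ^ t * 1024) by apply Tt_eq.
  assert (Ht0 : 0 < 2 ^ t) by (apply pow_lt; lra).
  assert (HTpos : 0 < Tt t) by lra.
  assert (hc := sqrt2_ge).
  assert (H2k : 0 < 2 ^ (k+1)) by (apply pow_lt; lra).
  assert (Hnrm : / nrm t = 2 ^ (k + 1)).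
  { rewrite nrm_eq, Hk. replace (2*k+1+1)%nat with (2*(k+1))%nat by lia.
    rewrite sqrt2_pow. apply Rinv_inv. }
  assert (Hn0 : nrm t <> 0).
  { intro E. rewrite E, Rinv_0 in Hnrm. lra. }
  assert (Hn := nrm_ge t).
  assert (Heps : forall d, 0 <= d -> d <= (1/8) / Tt t ->
            nrm t * (2 * d * (2 * sqrt 2) ^ t) <= 1/4096).
  { intros d Hd0 Hd. eapply Rle_trans; [apply eps_le; exact Hd0|].
    rewrite HT in Hd. unfold Rdiv in Hd. rewrite Rinv_mult in Hd.
    assert (2 ^ t * d <= 2 ^ t * (1 / 8 * (/ 2 ^ t * / 1024))) by (apply Rmult_le_compat_l; lra).
    replace (2 ^ t * (1 / 8 * (/ 2 ^ t * / 1024))) with (1/8/1024) in H by (field; lra).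
    lra. }
  unfold H, alpha, beta.
  set (z := expi (x / Tt t)).
  apply Re_half.
  destruct hx as [hx | hx].
  - set (d := Rabs (x / Tt t)).
    assert (Hd : d <= (1/8) / Tt t).
    { unfold d, Rdiv. rewrite Rabs_mult, Rabs_inv, (Rabs_pos_eq (Tt t)) by lra.
      apply Rmult_le_compat_r; [left; apply Rinv_0_lt_compat; lra | lra]. }
    assert (Hd1 : Rabs (x / Tt t - 0) <= 1).
    { rewrite Rminus_0_r. fold d. assert (1/8/Tt t <= 1); [|lra].
      unfold Rdiv. rewrite HT, Rinv_mult.
      assert (/ 2 ^ t <= 1) by (rewrite <- Rinv_1; apply Rinv_le_contravar; [lra| apply pow_R1_Rle; lra]).
      assert (0 < / 2 ^ t) by (apply Rinv_0_lt_compat; lra). nra. }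
    assert (Hzw : Cmod (z - RtoC 1) <= d).
    { assert (h := expi_diff (x / Tt t) 0 Hd1). rewrite expi0, Rminus_0_r in h. exact h. }
    assert (Hpert := pert (sqrt 2) d z (RtoC 1) hc (Rabs_pos _) (Cmod_expi _) Cmod_R1 Hzw
                      (fun s => HQ_bound _ s n2_1) t).
    destruct Hpert as [HP HQ].
    assert (EP : RS_P t (RtoC 1) = RtoC (/ nrm t)).
    { unfold RS_P. rewrite Hnrm, Hk, RS_one. reflexivity. }
    assert (EQ : RS_Q t (RtoC 1) = RtoC 0).
    { unfold RS_Q. rewrite Hk, RS_one. reflexivity. }
    rewrite Cid4. eapply Rle_trans; [apply Cmod3|].
    rewrite (Cid6 (nrm t) (RS_P t (RtoC 1)) (RS_P t z) EP Hn0).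
    rewrite (Cid7 (nrm t) (RS_Q t z)), <- EQ.
    rewrite !Cmod_mult, !Cmod_expi, !Cmod_R, !(Rabs_pos_eq (nrm t)) by exact Hn.
    assert (h1 := Rmult_le_compat_l _ _ _ Hn HP).
    assert (h2 := Rmult_le_compat_l _ _ _ Hn HQ).
    assert (h3 := Heps d (Rabs_pos _) Hd).
    assert (h4 : Cmod (expi x - 1) <= Rabs x).
    { assert (Hx1 : Rabs (x - 0) <= 1) by (rewrite Rminus_0_r; lra).
      assert (h := expi_diff x 0 Hx1). rewrite expi0, Rminus_0_r in h. exact h. }
    lra.
  - set (d := Rabs (x / Tt t - PI)).
    assert (Ed : d = Rabs (x - Tt t * PI) / Tt t).
    { unfold d. replace (x / Tt t - PI) with ((x - Tt t * PI) * / Tt t) by (field; lra).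
      rewrite Rabs_mult, Rabs_inv, (Rabs_pos_eq (Tt t)) by lra. reflexivity. }
    assert (Hd : d <= (1/8) / Tt t).
    { rewrite Ed. unfold Rdiv.
      apply Rmult_le_compat_r; [left; apply Rinv_0_lt_compat; lra | lra]. }
    assert (Hd1 : Rabs (x / Tt t - PI) <= 1).
    { fold d. assert (1/8/Tt t <= 1); [|lra].
      unfold Rdiv. rewrite HT, Rinv_mult.
      assert (/ 2 ^ t <= 1) by (rewrite <- Rinv_1; apply Rinv_le_contravar; [lra| apply pow_R1_Rle; lra]).
      assert (0 < / 2 ^ t) by (apply Rinv_0_lt_compat; lra). nra. }
    assert (Hzw : Cmod (z - RtoC (-1)) <= d).
    { assert (h := expi_diff (x / Tt t) PI Hd1). rewrite expiPI in h. exact h. }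
    assert (Hpert := pert (sqrt 2) d z (RtoC (-1)) hc (Rabs_pos _) (Cmod_expi _) Cmod_Rm1 Hzw
                      (fun s => HQ_bound _ s n2_m1) t).
    destruct Hpert as [HP HQ].
    assert (EQ : RS_Q t (RtoC (-1)) = RtoC (/ nrm t)).
    { unfold RS_Q. rewrite Hnrm, Hk, RS_m1. reflexivity. }
    assert (EP : RS_P t (RtoC (-1)) = RtoC 0).
    { unfold RS_P. rewrite Hk, RS_m1. reflexivity. }
    rewrite Cid5. eapply Rle_trans; [apply Cmod3|].
    rewrite (Cid6 (nrm t) (RS_Q t (RtoC (-1))) (RS_Q t z) EQ Hn0).
    rewrite (Cid7 (nrm t) (RS_P t z)), <- EP.
    rewrite !Cmod_mult, !Cmod_expi, !Cmod_R, !(Rabs_pos_eq (nrm t)) by exact Hn.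
    assert (h1 := Rmult_le_compat_l _ _ _ Hn HP).
    assert (h2 := Rmult_le_compat_l _ _ _ Hn HQ).
    assert (h3 := Heps d (Rabs_pos _) Hd).
    assert (h4 : Cmod (expi (2 * x) - 1) <= 1/4).
    { assert (E2 : Rabs (2 * x - 2 * (Tt t * PI)) = 2 * Rabs (x - Tt t * PI)).
      { replace (2 * x - 2 * (Tt t * PI)) with (2 * (x - Tt t * PI)) by ring.
        rewrite Rabs_mult, Rabs_pos_eq by lra. reflexivity. }
      assert (Hx1 : Rabs (2 * x - 2 * (Tt t * PI)) <= 1) by lra.
      assert (h := expi_diff _ _ Hx1). rewrite expi_2T in h. lra. }
    lra.
Qed.
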